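(* For $t,a\in[0,1]$, the map $T_t\otimes\theta_a:\mathcal{M}_2\otimes\mathcal{M}_2\to\mathcal{M}_2\otimes\mathcal{M}_2$ is positive if and only if $t\le\frac{1}{2a+1}$.
   Context: For $t\in[0,1]$ the qubit depolarizing channel is $T_t(X)=(1-t)\mathrm{Tr}(X)\frac{I_2}{2}+tX$, and for $a\in[0,1]$, $\theta_a(X)=(1-a)X+aX^T$, both maps $\mathcal{M}_2\to\mathcal{M}_2$. *)

(* Defs.v *)
From HB Require Import structures.
From mathcomp Require Import all_boot all_order all_algebra.
From mathcomp Require Import reals.
From mathcomp.real_closed Require Import complex mxtens.
Set Implicit Arguments. Unset Strict Implicit. Unset Printing Implicit Defensive.
Import Order.TTheory GRing.Theory Num.Theory.
Local Open Scope ring_scope.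

(* Complex numbers over a real field R : realType are R[i] (real_closed/complex.v);
   M_n is 'M[R[i]]_n, and M_2 (x) M_2 is 'M[R[i]]_(2 * 2) with the Kronecker
   product *t of mxtens.v (index (i,k) <-> i * 2 + k). *)

Definition adjmx {C : numClosedFieldType} {m n} (A : 'M[C]_(m, n)) : 'M[C]_(n, m) :=
  (map_mx Num.conj A)^T.

Definition psd {C : numClosedFieldType} {n} (A : 'M[C]_n) : Prop :=
  adjmx A = A /\ forall v : 'cV[C]_n, 0 <= (adjmx v *m A *m v) 0 0.

Definition positive_map {C : numClosedFieldType} {n m}
  (Phi : 'M[C]_n -> 'M[C]_m) : Prop :=
  forall X : 'M[C]_n, psd X -> psd (Phi X).

Definition tens_map {C : numClosedFieldType}
  (Phi Psi : 'M[C]_2 -> 'M[C]_2) (X : 'M[C]_(2 * 2)) : 'M[C]_(2 * 2) :=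
  \sum_(i < 2) \sum_(j < 2) \sum_(k < 2) \sum_(l < 2)
    X (mxtens_index (i, k)) (mxtens_index (j, l))
      *: (Phi (delta_mx i j) *t Psi (delta_mx k l)).

Definition depol {R : realType} (t : R) (X : 'M[R[i]]_2) : 'M[R[i]]_2 :=
  (((1 - t)%:C)%C * \tr X / 2)%:M + (t%:C)%C *: X.

Definition theta {R : realType} (a : R) (X : 'M[R[i]]_2) : 'M[R[i]]_2 :=
  ((1 - a)%:C)%C *: X + (a%:C)%C *: X^T.

(* Main.v *)
Require Import Defs.
From HB Require Import structures.
From mathcomp Require Import all_boot all_order all_algebra.
From mathcomp Require Import reals.
From mathcomp.real_closed Require Import complex mxtens.
From mathcomp Require Import ring lra.
Import Order.TTheory GRing.Theory Num.Theory.
Local Open Scope ring_scope.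

Section CoreDefs.
Variables (R : realType) (I : Type) (i0 i1 : I) (x y c d : I -> I -> R).
Definition n2 (a b : R) := a ^+ 2 + b ^+ 2.
Definition NR p i := c p i0 * x i i0 - d p i0 * y i i0 + (c p i1 * x i i1 - d p i1 * y i i1).
Definition NI p i := c p i0 * y i i0 + d p i0 * x i i0 + (c p i1 * y i i1 + d p i1 * x i i1).
Definition MR p i := c p i0 * x i i0 + d p i0 * y i i0 + (c p i1 * x i i1 + d p i1 * y i i1).
Definition MI p i := d p i0 * x i i0 - c p i0 * y i i0 + (d p i1 * x i i1 - c p i1 * y i i1).
Definition sum4 (f : I -> I -> R) := f i0 i0 + f i0 i1 + f i1 i0 + f i1 i1.
Definition L1 := sum4 (fun p i => n2 (MR p i) (MI p i)).
Definition L2 := sum4 (fun p i => n2 (NR p i) (NI p i)).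
Definition CC := n2 (sum4 (fun p r => c p r * x p r + d p r * y p r))
                    (sum4 (fun p r => c p r * y p r - d p r * x p r)).
Definition DD := n2 (NR i0 i1 - NR i1 i0) (NI i0 i1 - NI i1 i0).
Definition Ff (t a : R) := (1-t)*(1-a)/2 * L1 + (1-t)*a/2 * L2 + t*(1-a)*CC + t*a*(L2 - DD).
End CoreDefs.
Arguments n2 {R} : simpl never.
Arguments NR {R I}.
Arguments NI {R I}.
Arguments MR {R I}.
Arguments MI {R I}.
Arguments sum4 {R I}.
Arguments L1 {R I}.
Arguments L2 {R I}.
Arguments CC {R I}.
Arguments DD {R I}.
Arguments Ff {R I}.

Section Core.
Variable R : realType.

Lemma n2_ge0 (a b : R) : 0 <= n2 a b.
Proof. by rewrite /n2 addr_ge0 // sqr_ge0. Qed.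

Lemma CS2 (p r s w0r w0i w1r w1i g0r g0i g1r g1i : R) :
  (p*(w0r^+2+w0i^+2) + 2*r*(w0r*w1r + w0i*w1i) + s*(w1r^+2+w1i^+2)) *
  (s*(g0r^+2+g0i^+2) - 2*r*(g0r*g1r + g0i*g1i) + p*(g1r^+2+g1i^+2))
  - (p*s - r^+2) * n2 (w0r*g0r - w0i*g0i + (w1r*g1r - w1i*g1i))
                      (w0r*g0i + w0i*g0r + (w1r*g1i + w1i*g1r))
  = n2 ((p*w0r + r*w1r)*g1r + (p*w0i + r*w1i)*g1i - ((r*w0r + s*w1r)*g0r + (r*w0i + s*w1i)*g0i))
       ((p*w0i + r*w1i)*g1r - (p*w0r + r*w1r)*g1i - ((r*w0i + s*w1i)*g0r - (r*w0r + s*w1r)*g0i)).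
Proof. rewrite /n2; ring. Qed.
End Core.
Arguments n2_ge0 {R}.

Section Core2.
Variable R : realType.

Lemma comb (D A1 A2 B1 B2 p1 q1 p2 q2 : R) : 0 < D -> 0 <= A1 -> 0 <= A2 ->
  0 <= B1 -> 0 <= B2 -> D * n2 p1 q1 <= A1 * B1 -> D * n2 p2 q2 <= A2 * B2 ->
  B1 + B2 <= D -> n2 (p1 + p2) (q1 + q2) <= A1 + A2.
Proof.
move=> D0 A10 A20 B10 B20 h1 h2 hB.
set m := p1 * p2 + q1 * q2.
have em : n2 (p1 + p2) (q1 + q2) = n2 p1 q1 + n2 p2 q2 + 2 * m by rewrite /n2 /m; ring.
have cs : m ^+ 2 <= n2 p1 q1 * n2 p2 q2.
  have -> : n2 p1 q1 * n2 p2 q2 = m ^+ 2 + (p1 * q2 - p2 * q1) ^+ 2 by rewrite /n2 /m; ring.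
  by rewrite lerDl sqr_ge0.
have x10 := n2_ge0 p1 q1; have x20 := n2_ge0 p2 q2.
have hm : 2 * D * m <= A1 * B2 + A2 * B1.
  have [m0|m0] := leP m 0.
    have : 2 * D * m <= 0 by rewrite pmulr_rle0 // mulr_gt0.
    move=> h; apply: le_trans h _; by rewrite addr_ge0 // mulr_ge0.
  rewrite -(@ler_pXn2r _ 2) ?nnegrE //; last first.
    by rewrite addr_ge0 // mulr_ge0.
    by rewrite mulr_ge0 // ?mulr_ge0 // ltW.
  have h3 : (2 * D * m) ^+ 2 <= 4 * (A1 * B1) * (A2 * B2).
    have -> : (2 * D * m) ^+ 2 = 4 * D ^+ 2 * m ^+ 2 by ring.
    have h4 : D ^+ 2 * m ^+ 2 <= (D * n2 p1 q1) * (D * n2 p2 q2).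
      have -> : (D * n2 p1 q1) * (D * n2 p2 q2) = D ^+ 2 * (n2 p1 q1 * n2 p2 q2) by ring.
      by rewrite ler_wpM2l // sqr_ge0.
    have h5 : (D * n2 p1 q1) * (D * n2 p2 q2) <= (A1 * B1) * (A2 * B2).
      apply: ler_pM => //; by rewrite mulr_ge0 // ltW.
    have h7 := le_trans h4 h5.
    lra.
  apply: le_trans h3 _.
  have -> : (A1 * B2 + A2 * B1) ^+ 2 = 4 * (A1 * B1) * (A2 * B2) + (A1 * B2 - A2 * B1) ^+ 2 by ring.
  by rewrite lerDl sqr_ge0.
have hDX : D * n2 (p1 + p2) (q1 + q2) <= D * (A1 + A2).
  rewrite em.
  have h6 : (A1 + A2) * (B1 + B2) <= D * (A1 + A2).
    by rewrite mulrC; apply: ler_wpM2r; rewrite // addr_ge0.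
  apply: le_trans h6.
  have -> : D * (n2 p1 q1 + n2 p2 q2 + 2 * m) = D * n2 p1 q1 + D * n2 p2 q2 + 2 * D * m by ring.
  have -> : (A1 + A2) * (B1 + B2) = A1 * B1 + A2 * B2 + (A1 * B2 + A2 * B1) by ring.
  by rewrite lerD // lerD.
by rewrite -(ler_pM2l D0).
Qed.

Lemma lim_le (X Y K : R) : 0 <= K -> (forall e, 0 < e -> X <= Y + e * K) -> X <= Y.
Proof.
move=> K0 H; have [//|hlt] := leP X Y.
set e := (X - Y) / (K + 1).
have K1 : K + 1 != 0 by rewrite gt_eqF // ltr_wpDl.
have he : 0 < e by rewrite /e divr_gt0 ?subr_gt0 // ltr_wpDl.
have E : e * K + e = X - Y by rewrite /e; field.
have := H e he; lra.
Qed.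
End Core2.
Arguments comb {R}.
Arguments lim_le {R}.

Ltac pos := repeat (first [ done | rewrite subr_ge0 | apply: addr_ge0 | apply: mulr_ge0 | rewrite invr_ge0 ler0n | assumption ]).

Section Core3.
Variables (R : realType) (I : Type) (i0 i1 : I) (x y c d : I -> I -> R).

Local Notation NR := (NR i0 i1 x y c d).
Local Notation NI := (NI i0 i1 x y c d).
Local Notation MR := (MR i0 i1 x y c d).
Local Notation MI := (MI i0 i1 x y c d).

Lemma F1 : DD i0 i1 x y c d <= 2 * L2 i0 i1 x y c d.
Proof.
rewrite /DD /L2 /sum4.
have h := n2_ge0 (NR i0 i1 + NR i1 i0) (NI i0 i1 + NI i1 i0).
have := n2_ge0 (NR i0 i0) (NI i0 i0); have := n2_ge0 (NR i1 i1) (NI i1 i1).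
move: h; rewrite /n2 => h h1 h2; nra.
Qed.

Let Sp := 2 * (x i0 i0 ^+ 2 + y i0 i0 ^+ 2 + x i1 i0 ^+ 2 + y i1 i0 ^+ 2).
Let Sr := 2 * (x i0 i0 * x i0 i1 + y i0 i0 * y i0 i1 + x i1 i0 * x i1 i1 + y i1 i0 * y i1 i1).
Let Ss := 2 * (x i0 i1 ^+ 2 + y i0 i1 ^+ 2 + x i1 i1 ^+ 2 + y i1 i1 ^+ 2).
Let Q p := Sp * (c p i0 ^+ 2 + d p i0 ^+ 2) + 2 * Sr * (c p i0 * c p i1 + d p i0 * d p i1)
  + Ss * (c p i1 ^+ 2 + d p i1 ^+ 2).
Let B (g0r g0i g1r g1i : R) := Ss * (g0r ^+ 2 + g0i ^+ 2) - 2 * Sr * (g0r * g1r + g0i * g1i)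
  + Sp * (g1r ^+ 2 + g1i ^+ 2).

Lemma aQ p : n2 (NR p i0) (NI p i0) + n2 (MR p i0) (MI p i0) + n2 (NR p i1) (NI p i1)
  + n2 (MR p i1) (MI p i1) = Q p.
Proof. rewrite /n2 /Q /Sp /Sr /Ss /NR /NI /MR /MI /=; ring. Qed.

Lemma Bpos g0r g0i g1r g1i : 0 <= B g0r g0i g1r g1i.
Proof.
have -> : B g0r g0i g1r g1i =
  n2 (g1r * x i0 i0 - g1i * y i0 i0 - (g0r * x i0 i1 - g0i * y i0 i1))
          (g1r * y i0 i0 + g1i * x i0 i0 - (g0r * y i0 i1 + g0i * x i0 i1))
     + n2 (g1r * x i1 i0 - g1i * y i1 i0 - (g0r * x i1 i1 - g0i * y i1 i1))
          (g1r * y i1 i0 + g1i * x i1 i0 - (g0r * y i1 i1 + g0i * x i1 i1))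
  + (n2 (g1r * x i0 i0 + g1i * y i0 i0 - (g0r * x i0 i1 + g0i * y i0 i1))
          (g1i * x i0 i0 - g1r * y i0 i0 - (g0i * x i0 i1 - g0r * y i0 i1))
     + n2 (g1r * x i1 i0 + g1i * y i1 i0 - (g0r * x i1 i1 + g0i * y i1 i1))
          (g1i * x i1 i0 - g1r * y i1 i0 - (g0i * x i1 i1 - g0r * y i1 i1))).
  rewrite /B /n2 /Sp /Sr /Ss; ring.
by rewrite /n2 !addr_ge0 // sqr_ge0.
Qed.

Lemma Q_ge0 p : 0 <= Q p.
Proof. by rewrite -aQ /n2 !addr_ge0 // sqr_ge0. Qed.

Lemma F2 : DD i0 i1 x y c d <= L1 i0 i1 x y c d + L2 i0 i1 x y c d.
Proof.
have hsum : L1 i0 i1 x y c d + L2 i0 i1 x y c d = Q i0 + Q i1.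
  rewrite -(aQ i0) -(aQ i1) /L1 /L2 /sum4; ring.
rewrite hsum.
set wn := fun p => c p i0 ^+ 2 + d p i0 ^+ 2 + c p i1 ^+ 2 + d p i1 ^+ 2.
have wn0 p : 0 <= wn p by rewrite /wn !addr_ge0 // sqr_ge0.
set b0 := B (x i1 i0) (y i1 i0) (x i1 i1) (y i1 i1).
set b1 := B (- x i0 i0) (- y i0 i0) (- x i0 i1) (- y i0 i1).
have bsum : b0 + b1 = Sp * Ss - Sr ^+ 2 by rewrite /b0 /b1 /B /Sp /Sr /Ss; ring.
have b00 : 0 <= b0 by apply: Bpos.
have b10 : 0 <= b1 by apply: Bpos.
set un0 := x i1 i0 ^+ 2 + y i1 i0 ^+ 2 + x i1 i1 ^+ 2 + y i1 i1 ^+ 2.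
set un1 := x i0 i0 ^+ 2 + y i0 i0 ^+ 2 + x i0 i1 ^+ 2 + y i0 i1 ^+ 2.
have un00 : 0 <= un0 by rewrite /un0 !addr_ge0 // sqr_ge0.
have un10 : 0 <= un1 by rewrite /un1 !addr_ge0 // sqr_ge0.
have SpSs : Sp + Ss = 2 * (un0 + un1) by rewrite /Sp /Ss /un0 /un1; ring.
apply: (@lim_le _ _ _ (wn i0 + wn i1)); first by rewrite addr_ge0.
move=> e e0; have e0' := ltW e0.
set D := (Sp + e) * (Ss + e) - Sr ^+ 2.
set A0 := Q i0 + e * wn i0.
set A1 := Q i1 + e * wn i1.
set B0 := b0 + e * un0.
set B1 := b1 + e * un1.
have hD : D = b0 + b1 + e * (Sp + Ss) + e ^+ 2 by rewrite /D bsum; ring.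
have D0 : 0 < D.
  rewrite hD SpSs; have : 0 < e ^+ 2 by rewrite exprn_gt0.
  have : 0 <= e * (2 * (un0 + un1)) by apply: mulr_ge0 => //; apply: mulr_ge0 => //; apply: addr_ge0.
  lra.
have A00 : 0 <= A0 by apply: addr_ge0; [apply: Q_ge0 | apply: mulr_ge0].
have A10 : 0 <= A1 by apply: addr_ge0; [apply: Q_ge0 | apply: mulr_ge0].
have B00 : 0 <= B0 by apply: addr_ge0 => //; apply: mulr_ge0.
have B10 : 0 <= B1 by apply: addr_ge0 => //; apply: mulr_ge0.
have hB : B0 + B1 <= D.
  rewrite hD SpSs /B0 /B1.
  have : 0 <= e * (un0 + un1) by apply: mulr_ge0 => //; apply: addr_ge0.
  have : 0 <= e ^+ 2 by rewrite sqr_ge0.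
  lra.
have h0 : D * n2 (NR i0 i1) (NI i0 i1) <= A0 * B0.
  rewrite -subr_ge0.
  have -> : A0 * B0 - D * n2 (NR i0 i1) (NI i0 i1) =
    ((Sp + e)*(c i0 i0 ^+2 + d i0 i0 ^+2) + 2*Sr*(c i0 i0 * c i0 i1 + d i0 i0 * d i0 i1)
       + (Ss + e)*(c i0 i1 ^+2 + d i0 i1 ^+2)) *
    ((Ss + e)*(x i1 i0 ^+2 + y i1 i0 ^+2) - 2*Sr*(x i1 i0 * x i1 i1 + y i1 i0 * y i1 i1)
       + (Sp + e)*(x i1 i1 ^+2 + y i1 i1 ^+2))
    - ((Sp + e)*(Ss + e) - Sr ^+ 2) * n2 (c i0 i0 * x i1 i0 - d i0 i0 * y i1 i0
          + (c i0 i1 * x i1 i1 - d i0 i1 * y i1 i1))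
       (c i0 i0 * y i1 i0 + d i0 i0 * x i1 i0 + (c i0 i1 * y i1 i1 + d i0 i1 * x i1 i1)).
    rewrite /A0 /B0 /D /Q /b0 /B /wn /un0 /NR /NI; ring.
  by rewrite CS2 n2_ge0.
have h1 : D * n2 (- NR i1 i0) (- NI i1 i0) <= A1 * B1.
  rewrite -subr_ge0.
  have -> : A1 * B1 - D * n2 (- NR i1 i0) (- NI i1 i0) =
    ((Sp + e)*(c i1 i0 ^+2 + d i1 i0 ^+2) + 2*Sr*(c i1 i0 * c i1 i1 + d i1 i0 * d i1 i1)
       + (Ss + e)*(c i1 i1 ^+2 + d i1 i1 ^+2)) *
    ((Ss + e)*((- x i0 i0) ^+2 + (- y i0 i0) ^+2) - 2*Sr*((- x i0 i0) * (- x i0 i1) + (- y i0 i0) * (- y i0 i1))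
       + (Sp + e)*((- x i0 i1) ^+2 + (- y i0 i1) ^+2))
    - ((Sp + e)*(Ss + e) - Sr ^+ 2) * n2 (c i1 i0 * (- x i0 i0) - d i1 i0 * (- y i0 i0)
          + (c i1 i1 * (- x i0 i1) - d i1 i1 * (- y i0 i1)))
       (c i1 i0 * (- y i0 i0) + d i1 i0 * (- x i0 i0) + (c i1 i1 * (- y i0 i1) + d i1 i1 * (- x i0 i1))).
    rewrite /A1 /B1 /D /Q /b1 /B /wn /un1 /NR /NI /n2; ring.
  by rewrite CS2 n2_ge0.
have := @comb _ D A0 A1 B0 B1 _ _ _ _ D0 A00 A10 B00 B10 h0 h1 hB.
rewrite /DD /A0 /A1 => h.
apply: le_trans h _; rewrite le_eqVlt; apply/orP; left; apply/eqP; ring.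
Qed.

Lemma core_ineq (t a : R) : 0 <= t <= 1 -> 0 <= a <= 1 -> t * (2 * a + 1) <= 1 ->
  0 <= Ff i0 i1 x y c d t a.
Proof.
move=> /andP[t0 t1] /andP[a0 a1] hta.
have hF1 := F1; have hF2 := F2.
set l1 := L1 i0 i1 x y c d in hF2 *.
set l2 := L2 i0 i1 x y c d in hF1 hF2 *.
set dd := DD i0 i1 x y c d in hF1 hF2 *.
have l10 : 0 <= l1 by rewrite /l1 /L1 /sum4 /n2 !addr_ge0 // sqr_ge0.
have l20 : 0 <= l2 by rewrite /l2 /L2 /sum4 /n2 !addr_ge0 // sqr_ge0.
have cc0 : 0 <= CC i0 i1 x y c d by apply: n2_ge0.
have u1 : 0 <= l1 + l2 - dd by lra.
have u2 : 0 <= 2 * l2 - dd by lra.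
have ta0 : 0 <= t * a by apply: mulr_ge0.
have t1a : 0 <= t * (1 - a) by apply: mulr_ge0 => //; rewrite subr_ge0.
have mu0 : 0 <= (1 - t) * (1 - a) / 2 by pos.
rewrite /Ff -/l1 -/l2 -/dd.
have [h|h] := leP (t * a) ((1 - t) * (1 - a) / 2).
  have -> : (1 - t) * (1 - a) / 2 * l1 + (1 - t) * a / 2 * l2 + t * (1 - a) * CC i0 i1 x y c d
      + t * a * (l2 - dd) =
    ((1 - t) * (1 - a) / 2 - t * a) * l1 + (1 - t) * a / 2 * l2 + t * (1 - a) * CC i0 i1 x y c d
      + t * a * (l1 + l2 - dd) by ring.
  by pos.
have -> : (1 - t) * (1 - a) / 2 * l1 + (1 - t) * a / 2 * l2 + t * (1 - a) * CC i0 i1 x y c d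
    + t * a * (l2 - dd) =
  (1 - t) * (1 - a) / 2 * (l1 + l2 - dd) + (t * a - (1 - t) * (1 - a) / 2) * (2 * l2 - dd)
    + ((1 - t) / 2 - t * a) * l2 + t * (1 - a) * CC i0 i1 x y c d by ring.
have h' := ltW h.
have h2 : 0 <= (1 - t) / 2 - t * a by lra.
by pos.
Qed.

End Core3.

Section Spec.
Variable C : numClosedFieldType.

Lemma adjmxE m n (A : 'M[C]_(m, n)) i j : adjmx A i j = Num.conj (A j i).
Proof. by rewrite /adjmx !mxE. Qed.

Lemma adjmxK m n (A : 'M[C]_(m, n)) : adjmx (adjmx A) = A.
Proof. by apply/matrixP => i j; rewrite !adjmxE conjCK. Qed.

Lemma tstar_adj n (A : 'M[C]_n) : map_mx Num.conj (A^T) = adjmx A.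
Proof. by apply/matrixP => i j; rewrite adjmxE !mxE. Qed.

Lemma psd_decomp n (X : 'M[C]_n) : psd X ->
  exists (d : 'I_n -> C) (V : 'I_n -> 'cV[C]_n),
    (forall k, 0 <= d k) /\ X = \sum_(k < n) d k *: (V k *m adjmx (V k)).
Proof.
case=> hX hpos.
have Xn : X \is normalmx by rewrite qualifE tstar_adj hX eqxx.
move/orthomx_spectralP: Xn.
set P := spectralmx X; set sp := spectral_diag X => XE.
have PU : P \is unitarymx := spectral_unitarymx X.
rewrite invmx_unitary // tstar_adj in XE.
have PP : P *m adjmx P = 1%:M by rewrite -tstar_adj; apply/unitarymxP.
pose V k := adjmx (row k P).
have XE2 : X = \sum_(k < n) sp 0 k *: (V k *m adjmx (V k)).
  apply/matrixP => i j; rewrite {1}XE summxE mul_mx_diag mxE.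
  apply: eq_bigr => l _.
  rewrite !mxE big_ord1 /V !adjmxE !mxE conjCK.
  ring.
exists (fun k => sp 0 k), V; split => // k.
have := hpos (V k).
suff -> : (adjmx (V k) *m X *m V k) 0 0 = sp 0 k by [].
rewrite {1}XE /V adjmxK !mulmxA -row_mul PP -row_mul mul1mx -row_mul mul_diag_mx mxE.
rewrite -[RHS]mulr1; have := congr1 (fun M : 'M[C]_n => M k k) PP; rewrite !mxE eqxx mulr1n => <-.
rewrite mulr_sumr; apply: eq_bigr => j _; by rewrite !mxE mulrA.
Qed.
End Spec.
Arguments psd_decomp {C n}.

Section Bridge.
Variable R : realType.
Local Notation C := R[i].
Local Notation Re := (@complex.Re R).
Local Notation Im := (@complex.Im R).
Local Notation o0 := (ord0 : 'I_2).
Local Notation o1 := (lift ord0 ord0 : 'I_2).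

Lemma ord2P (p : 'I_2) : p = o0 \/ p = o1.
Proof. by case: p => [[|[|//]]] pf; [left|right]; apply: val_inj. Qed.
Lemma e01 : (o0 == o1) = false. Proof. by []. Qed.
Lemma e10 : (o1 == o0) = false. Proof. by []. Qed.
Lemma bT : (true%:R : C) = 1. Proof. by []. Qed.
Lemma bF : (false%:R : C) = 0. Proof. by []. Qed.

Lemma tr_delta (i j : 'I_2) : \tr (delta_mx i j : 'M[C]_2) = (i == j)%:R.
Proof.
rewrite /mxtrace !big_ord_recl big_ord0 !mxE.
by case: (ord2P i) => ->; case: (ord2P j) => ->; rewrite ?eqxx ?e01 ?e10 /=; ring.
Qed.

Lemma half_C (t : R) : ((t / 2)%:C)%C = (t%:C)%C / 2 :> C.
Proof. by rewrite rmorphM /= fmorphV /= rmorph_nat. Qed.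

Lemma depolE (t : R) (i j p q : 'I_2) : depol t (delta_mx i j) p q =
  ((1 - t) / 2)%:C%C * (i == j)%:R * (p == q)%:R + t%:C%C * ((p == i) && (q == j))%:R.
Proof. rewrite /depol !mxE tr_delta half_C; ring. Qed.

Lemma thetaE (a : R) (k l r s : 'I_2) : theta a (delta_mx k l) r s =
  (1 - a)%:C%C * ((r == k) && (s == l))%:R + a%:C%C * ((s == k) && (r == l))%:R.
Proof. by rewrite /theta !mxE. Qed.

Lemma tens_mapE (Phi Psi : 'M[C]_2 -> 'M[C]_2) (X : 'M[C]_(2*2)) (p q r s : 'I_2) :
  tens_map Phi Psi X (mxtens_index (p, r)) (mxtens_index (q, s)) =
  \sum_(i < 2) \sum_(j < 2) \sum_(k < 2) \sum_(l < 2)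
     X (mxtens_index (i, k)) (mxtens_index (j, l)) * (Phi (delta_mx i j) p q * Psi (delta_mx k l) r s).
Proof.
rewrite /tens_map summxE; apply: eq_bigr => i _; rewrite summxE; apply: eq_bigr => j _.
rewrite summxE; apply: eq_bigr => k _; rewrite summxE; apply: eq_bigr => l _.
by rewrite mxE tensmxE.
Qed.


Definition LamF (t a : R) (X : 'M[C]_(2*2)) (p q r s : 'I_2) : C :=
   ((1 - t) / 2)%:C%C * (p == q)%:R *
     ((1 - a)%:C%C * \sum_(i < 2) X (mxtens_index (i, r)) (mxtens_index (i, s))
      + a%:C%C * \sum_(i < 2) X (mxtens_index (i, s)) (mxtens_index (i, r)))
   + t%:C%C * ((1 - a)%:C%C * X (mxtens_index (p, r)) (mxtens_index (q, s))
      + a%:C%C * X (mxtens_index (p, s)) (mxtens_index (q, r))).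

Lemma LamE (t a : R) (X : 'M[C]_(2*2)) (p q r s : 'I_2) :
  tens_map (depol t) (theta a) X (mxtens_index (p, r)) (mxtens_index (q, s)) =
  LamF t a X p q r s.
Proof.
rewrite tens_mapE.
under eq_bigr => i _ do under eq_bigr => j _ do under eq_bigr => k _ do
  under eq_bigr => l _ do rewrite depolE thetaE.
rewrite /LamF !big_ord_recl !big_ord0.
case: (ord2P p) => ->; case: (ord2P q) => ->; case: (ord2P r) => ->; case: (ord2P s) => ->.
all: rewrite ?eqxx ?e01 ?e10 ?andbT ?andbF ?andTb ?andFb ?bT ?bF; ring.
Qed.

Definition LamG (t a : R) (U : 'I_2 -> 'I_2 -> C) (p q r s : 'I_2) : C :=
   ((1 - t) / 2)%:C%C * (p == q)%:R *
     ((1 - a)%:C%C * \sum_(i < 2) (U i r * Num.conj (U i s))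
      + a%:C%C * \sum_(i < 2) (U i s * Num.conj (U i r)))
   + t%:C%C * ((1 - a)%:C%C * (U p r * Num.conj (U q s))
      + a%:C%C * (U p s * Num.conj (U q r))).

Definition fC (t a : R) (U W : 'I_2 -> 'I_2 -> C) : C :=
  \sum_(q < 2) \sum_(s < 2) \sum_(p < 2) \sum_(r < 2)
    Num.conj (W p r) * LamG t a U p q r s * W q s.

Lemma fC_ring (t a : R) (U W : 'I_2 -> 'I_2 -> C) :
  let Ub i r := Num.conj (U i r) in let Wb p r := Num.conj (W p r) in
  let N p i := W p o0 * U i o0 + W p o1 * U i o1 in
  let Nb p i := Wb p o0 * Ub i o0 + Wb p o1 * Ub i o1 in
  let M p i := W p o0 * Ub i o0 + W p o1 * Ub i o1 in
  let Mb p i := Wb p o0 * U i o0 + Wb p o1 * U i o1 in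
  let cz := Wb o0 o0 * U o0 o0 + Wb o0 o1 * U o0 o1 + Wb o1 o0 * U o1 o0 + Wb o1 o1 * U o1 o1 in
  let czb := W o0 o0 * Ub o0 o0 + W o0 o1 * Ub o0 o1 + W o1 o0 * Ub o1 o0 + W o1 o1 * Ub o1 o1 in
  let sN := N o0 o0 * Nb o0 o0 + N o0 o1 * Nb o0 o1 + N o1 o0 * Nb o1 o0 + N o1 o1 * Nb o1 o1 in
  let sM := M o0 o0 * Mb o0 o0 + M o0 o1 * Mb o0 o1 + M o1 o0 * Mb o1 o0 + M o1 o1 * Mb o1 o1 in
  fC t a U W =
    ((1 - t) / 2)%:C%C * (1 - a)%:C%C * sM + ((1 - t) / 2)%:C%C * a%:C%C * sN
    + t%:C%C * (1 - a)%:C%C * (cz * czb)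
    + t%:C%C * a%:C%C * (sN - (N o0 o1 - N o1 o0) * (Nb o0 o1 - Nb o1 o0)).
Proof.
move=> Ub Wb N Nb M Mb cz czb sN sM.
rewrite /fC /LamG !big_ord_recl !big_ord0 !eqxx ?e01 ?e10 ?bT ?bF.
rewrite /sN /sM /cz /czb /N /Nb /M /Mb /Ub /Wb.
ring.
Qed.

Ltac cplx := apply/eqP; rewrite eq_complex /n2 /=; apply/andP; split; apply/eqP; ring.

Lemma pairN (w0 w1 u0 u1 : C) :
  (w0 * u0 + w1 * u1) * (Num.conj w0 * Num.conj u0 + Num.conj w1 * Num.conj u1) =
  (n2 (Re w0 * Re u0 - Im w0 * Im u0 + (Re w1 * Re u1 - Im w1 * Im u1))
      (Re w0 * Im u0 + Im w0 * Re u0 + (Re w1 * Im u1 + Im w1 * Re u1)))%:C%C.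
Proof. case: w0 => ? ?; case: w1 => ? ?; case: u0 => ? ?; case: u1 => ? ?; cplx. Qed.

Lemma pairM (w0 w1 u0 u1 : C) :
  (w0 * Num.conj u0 + w1 * Num.conj u1) * (Num.conj w0 * u0 + Num.conj w1 * u1) =
  (n2 (Re w0 * Re u0 + Im w0 * Im u0 + (Re w1 * Re u1 + Im w1 * Im u1))
      (Im w0 * Re u0 - Re w0 * Im u0 + (Im w1 * Re u1 - Re w1 * Im u1)))%:C%C.
Proof. case: w0 => ? ?; case: w1 => ? ?; case: u0 => ? ?; case: u1 => ? ?; cplx. Qed.

Lemma pairC (w0 w1 w2 w3 u0 u1 u2 u3 : C) :
  (Num.conj w0 * u0 + Num.conj w1 * u1 + Num.conj w2 * u2 + Num.conj w3 * u3) *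
  (w0 * Num.conj u0 + w1 * Num.conj u1 + w2 * Num.conj u2 + w3 * Num.conj u3) =
  (n2 (Re w0 * Re u0 + Im w0 * Im u0 + (Re w1 * Re u1 + Im w1 * Im u1)
         + (Re w2 * Re u2 + Im w2 * Im u2) + (Re w3 * Re u3 + Im w3 * Im u3))
      (Re w0 * Im u0 - Im w0 * Re u0 + (Re w1 * Im u1 - Im w1 * Re u1)
         + (Re w2 * Im u2 - Im w2 * Re u2) + (Re w3 * Im u3 - Im w3 * Re u3)))%:C%C.
Proof.
case: w0 => ? ?; case: w1 => ? ?; case: w2 => ? ?; case: w3 => ? ?.
case: u0 => ? ?; case: u1 => ? ?; case: u2 => ? ?; case: u3 => ? ?; cplx.
Qed.

Lemma pairD (w0 w1 w2 w3 u0 u1 u2 u3 : C) :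
  (w0 * u0 + w1 * u1 - (w2 * u2 + w3 * u3)) *
  (Num.conj w0 * Num.conj u0 + Num.conj w1 * Num.conj u1
     - (Num.conj w2 * Num.conj u2 + Num.conj w3 * Num.conj u3)) =
  (n2 (Re w0 * Re u0 - Im w0 * Im u0 + (Re w1 * Re u1 - Im w1 * Im u1)
         - (Re w2 * Re u2 - Im w2 * Im u2 + (Re w3 * Re u3 - Im w3 * Im u3)))
      (Re w0 * Im u0 + Im w0 * Re u0 + (Re w1 * Im u1 + Im w1 * Re u1)
         - (Re w2 * Im u2 + Im w2 * Re u2 + (Re w3 * Im u3 + Im w3 * Re u3))))%:C%C.
Proof.
case: w0 => ? ?; case: w1 => ? ?; case: w2 => ? ?; case: w3 => ? ?.
case: u0 => ? ?; case: u1 => ? ?; case: u2 => ? ?; case: u3 => ? ?; cplx.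
Qed.

Lemma Ff_C (I : Type) (i0 i1 : I) x y c d (t a : R) :
  (Ff i0 i1 x y c d t a)%:C%C =
  ((1 - t) / 2)%:C%C * (1 - a)%:C%C * (L1 i0 i1 x y c d)%:C%C
  + ((1 - t) / 2)%:C%C * a%:C%C * (L2 i0 i1 x y c d)%:C%C
  + t%:C%C * (1 - a)%:C%C * (CC i0 i1 x y c d)%:C%C
  + t%:C%C * a%:C%C * ((L2 i0 i1 x y c d)%:C%C - (DD i0 i1 x y c d)%:C%C).
Proof.
rewrite /Ff -!rmorphM -!rmorphB -!rmorphM -!rmorphD; congr (_%:C)%C; ring.
Qed.

Lemma bridge (t a : R) (U W : 'I_2 -> 'I_2 -> C) :
  fC t a U W = (Ff o0 o1 (fun i r => Re (U i r)) (fun i r => Im (U i r))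
                  (fun p r => Re (W p r)) (fun p r => Im (W p r)) t a)%:C%C.
Proof.
have := fC_ring t a U W; rewrite /= => ->.
rewrite pairD !pairN !pairM pairC.
rewrite Ff_C /L1 /L2 /CC /DD /sum4 !rmorphD.
rewrite /NR /NI /MR /MI /=.
ring.
Qed.

End Bridge.
Arguments LamF {R}.
Arguments LamG {R}.
Arguments fC {R}.
Arguments LamE {R}.
Arguments bridge {R}.
Arguments fC_ring {R}.



Section Lin.
Variable C : numClosedFieldType.
Variables (Phi Psi : 'M[C]_2 -> 'M[C]_2).

Lemma tens_mapD (X Y : 'M[C]_(2*2)) :
  tens_map Phi Psi (X + Y) = tens_map Phi Psi X + tens_map Phi Psi Y.
Proof.
rewrite /tens_map -big_split; apply: eq_bigr => i _; rewrite -big_split.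
apply: eq_bigr => j _; rewrite -big_split; apply: eq_bigr => k _; rewrite -big_split.
by apply: eq_bigr => l _; rewrite mxE scalerDl.
Qed.

Lemma tens_map0 : tens_map Phi Psi 0 = 0.
Proof.
rewrite /tens_map big1 // => i _; rewrite big1 // => j _; rewrite big1 // => k _.
by rewrite big1 // => l _; rewrite mxE scale0r.
Qed.

Lemma tens_mapZ (c : C) (X : 'M[C]_(2*2)) :
  tens_map Phi Psi (c *: X) = c *: tens_map Phi Psi X.
Proof.
rewrite /tens_map scaler_sumr; apply: eq_bigr => i _; rewrite scaler_sumr.
apply: eq_bigr => j _; rewrite scaler_sumr; apply: eq_bigr => k _; rewrite scaler_sumr.
by apply: eq_bigr => l _; rewrite mxE scalerA.
Qed.

Lemma tens_map_sum n (d : 'I_n -> C) (Y : 'I_n -> 'M[C]_(2*2)) :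
  tens_map Phi Psi (\sum_(k < n) d k *: Y k) = \sum_(k < n) d k *: tens_map Phi Psi (Y k).
Proof.
rewrite (big_morph (tens_map Phi Psi) tens_mapD tens_map0).
by apply: eq_bigr => k _; rewrite tens_mapZ.
Qed.

Lemma adjmx_mul m n p (A : 'M[C]_(m, n)) (B : 'M[C]_(n, p)) :
  adjmx (A *m B) = adjmx B *m adjmx A.
Proof. by rewrite /adjmx map_mxM trmx_mul. Qed.

Lemma rank1_psd n (v : 'cV[C]_n) : psd (v *m adjmx v).
Proof.
split; first by rewrite adjmx_mul adjmxK.
move=> u; rewrite mulmxA -[adjmx u *m v *m adjmx v *m u]mulmxA.
have -> : adjmx v *m u = adjmx (adjmx u *m v) by rewrite adjmx_mul adjmxK.
rewrite mxE big_ord1 adjmxE; exact: mul_conjC_ge0.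
Qed.
End Lin.
Arguments rank1_psd {C n}.

Section Final.
Variable R : realType.
Local Notation C := R[i].
Local Notation Re := (@complex.Re R).
Local Notation Im := (@complex.Im R).
Local Notation o0 := (ord0 : 'I_2).
Local Notation o1 := (lift ord0 ord0 : 'I_2).

Lemma conjR (x : R) : Num.conj (x%:C%C) = x%:C%C :> C.
Proof. exact: conjc_real. Qed.

Lemma LamE_rank1 (t a : R) (v : 'cV[C]_(2*2)) (p q r s : 'I_2) :
  tens_map (depol t) (theta a) (v *m adjmx v) (mxtens_index (p, r)) (mxtens_index (q, s)) =
  LamG t a (fun i r => v (mxtens_index (i, r)) 0) p q r s.
Proof.
have XE m n : (v *m adjmx v) m n = v m 0 * Num.conj (v n 0).
  by rewrite mxE big_ord1 adjmxE.
by rewrite LamE /LamF /LamG !big_ord_recl !big_ord0 !XE.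
Qed.

Lemma sum_idx (F : 'I_(2*2) -> C) :
  \sum_m F m = \sum_(p < 2) \sum_(r < 2) F (mxtens_index (p, r)).
Proof.
rewrite (reindex (@mxtens_index 2 2)) /=; last first.
  by exists (@mxtens_unindex 2 2) => x _; rewrite (mxtens_indexK, mxtens_unindexK).
rewrite pair_big /=; by apply: eq_bigr => -[p r] _.
Qed.

Lemma quadE (t a : R) (v w : 'cV[C]_(2*2)) :
  (adjmx w *m tens_map (depol t) (theta a) (v *m adjmx v) *m w) 0 0 =
  fC t a (fun i r => v (mxtens_index (i, r)) 0) (fun p r => w (mxtens_index (p, r)) 0).
Proof.
rewrite mxE.
under eq_bigr => n _ do rewrite mxE big_distrl /=.
rewrite sum_idx /fC; apply: eq_bigr => q _; apply: eq_bigr => s _.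
rewrite sum_idx; apply: eq_bigr => p _; apply: eq_bigr => r _.
by rewrite LamE_rank1 adjmxE.
Qed.

Lemma herm (t a : R) (X : 'M[C]_(2*2)) : adjmx X = X ->
  adjmx (tens_map (depol t) (theta a) X) = tens_map (depol t) (theta a) X.
Proof.
move=> hX.
have hXE m n : Num.conj (X m n) = X n m by rewrite -adjmxE hX.
apply/matrixP => m n; rewrite adjmxE.
case: (mxtens_indexP m) => p r; case: (mxtens_indexP n) => q s.
rewrite !LamE /LamF !big_ord_recl !big_ord0.
rewrite !(rmorphD, rmorphM) /= !conjR !hXE rmorph_nat [q == p]eq_sym.
ring.
Qed.

Lemma suffic (t a : R) : 0 <= t <= 1 -> 0 <= a <= 1 -> t * (2 * a + 1) <= 1 ->
  positive_map (tens_map (depol t) (theta a)).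
Proof.
move=> ht ha hta X hX; split; first by apply: herm; case: hX.
move=> w.
have [d [V [d0 XE]]] := psd_decomp _ hX.
rewrite XE tens_map_sum mulmx_sumr mulmx_suml summxE.
apply: sumr_ge0 => k _.
rewrite -scalemxAr -scalemxAl mxE.
apply: mulr_ge0 => //.
rewrite quadE bridge ler0c; exact: core_ineq.
Qed.

Lemma necess (t a : R) : positive_map (tens_map (depol t) (theta a)) ->
  t * (2 * a + 1) <= 1.
Proof.
move=> Hpos.
pose U (i r : 'I_2) : C := ((if i == r then 1 else 0) : R)%:C%C.
pose W (p r : 'I_2) : C :=
  ((if (p == o0) && (r == o1) then 1 else if (p == o1) && (r == o0) then -1 else 0) : R)%:C%C.
pose v : 'cV[C]_(2*2) := \col_m U (@mxtens_unindex 2 2 m).1 (@mxtens_unindex 2 2 m).2.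
pose w : 'cV[C]_(2*2) := \col_m W (@mxtens_unindex 2 2 m).1 (@mxtens_unindex 2 2 m).2.
have [_ Hq] := Hpos _ (rank1_psd v).
have := Hq w; rewrite quadE.
have -> : fC t a (fun i r => v (mxtens_index (i, r)) 0) (fun p r => w (mxtens_index (p, r)) 0)
    = fC t a U W.
  by rewrite /fC /LamG /v /w !big_ord_recl !big_ord0 !mxE !mxtens_indexK.
rewrite bridge ler0c.
rewrite /Ff /L1 /L2 /CC /DD /sum4 /NR /NI /MR /MI /n2 /U /W /= ?eqxx ?e01 ?e10 /=.
move=> h; lra.
Qed.
End Final.

Theorem mainTheorem16 (R : realType) (t a : R) :
  0 <= t <= 1 -> 0 <= a <= 1 ->
  (positive_map (tens_map (depol t) (theta a)) <-> t <= 1 / (2 * a + 1)).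
Proof.
move=> ht ha.
have pa : 0 < 2 * a + 1 by case/andP: ha => a0 _; lra.
rewrite ler_pdivlMr //.
split; first exact: necess.
exact: suffic.
Qed.
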